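(* Let $\mathcal{C}=\{C_1,\dots,C_k\}\subset\mathbb{P}^2_{\mathbb{C}}$ be a $d$-arrangement of $k\geq 4$ smooth curves of degree $d$ with $t_2\neq 0$ and $t_r=0$ for all $r>2$. Then the Levi graph $G$ of $\mathcal{C}$ contains an induced cycle of length $2k$.
   Context: A $d$-arrangement is an arrangement $\mathcal{C}=\{C_1,\dots,C_k\}$ of $k\geq 3$ smooth plane curves all of the same degree $d\geq 1$ such that the singular locus $\mathrm{Sing}(\mathcal{C})$ consists only of ordinary intersection points (locally like intersections of lines). For $r\geq 2$, $t_r$ denotes the number of points of $\mathrm{Sing}(\mathcal{C})$ lying on exactly $r$ curves of $\mathcal{C}$. The Levi graph of $\mathcal{C}$ is the bipartite graph with one vertex for each point $p\in\mathrm{Sing}(\mathcal{C})$, one vertex for each curve $C_j$, and an edge between the vertex of $p$ and the vertex of $C_j$ iff $p\in C_j$. *)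

(* Defs.v *)
From HB Require Import structures.
From mathcomp Require Import all_boot all_order all_algebra.
From mathcomp Require Import complex.
From mathcomp Require Import Rstruct.
From mathcomp Require Import mpoly.
Set Implicit Arguments. Unset Strict Implicit. Unset Printing Implicit Defensive.
Import GRing.Theory.
Local Open Scope ring_scope.

Notation CC := (complex Rdefinitions.R).

(* Homogeneous coordinates of a point of P^2_C: a vector of C^3 (required nonzero). *)
Definition nonzero3 (x : 'I_3 -> CC) : Prop := exists i, x i != 0.

Definition proj_eq (x y : 'I_3 -> CC) : Prop :=
  exists c : CC, c != 0 /\ forall i, y i = c * x i.

Definition on_curve (F : {mpoly CC[3]}) (x : 'I_3 -> CC) : bool := F.@[x] == 0.

Definition grad (F : {mpoly CC[3]}) (x : 'I_3 -> CC) : 'I_3 -> CC :=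
  fun i => (F^`M(i)).@[x].

Definition smooth_curve (d : nat) (F : {mpoly CC[3]}) : Prop :=
  [/\ F != 0, F \is d.-homog &
      forall x, nonzero3 x -> on_curve F x -> exists i, grad F x i != 0].

Definition lin_indep2 (u v : 'I_3 -> CC) : Prop :=
  forall a b : CC, (forall i, a * u i + b * v i = 0) -> a = 0 /\ b = 0.

Definition in_sing (k : nat) (F : 'I_k -> {mpoly CC[3]}) (x : 'I_3 -> CC) : Prop :=
  [/\ nonzero3 x, on_curve (\prod_(j < k) F j) x &
      forall i, grad (\prod_(j < k) F j) x i = 0].

Definition mult (k : nat) (F : 'I_k -> {mpoly CC[3]}) (x : 'I_3 -> CC) : nat :=
  #|[set j | on_curve (F j) x]|.

(* d-arrangement: k >= 3 smooth curves of degree d >= 1, pairwise distinct,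
   whose singular points are ordinary (the curves through a singular point
   have pairwise distinct tangent lines, i.e. pairwise independent gradients). *)
Definition d_arrangement (k d : nat) (F : 'I_k -> {mpoly CC[3]}) : Prop :=
  [/\ (3 <= k)%N, (1 <= d)%N, forall j, smooth_curve d (F j),
      forall i j, i != j ->
        exists x, nonzero3 x /\ on_curve (F i) x != on_curve (F j) x
    & forall x, in_sing F x -> forall i j, i != j ->
        on_curve (F i) x -> on_curve (F j) x ->
        lin_indep2 (grad (F i) x) (grad (F j) x)].

(* Levi graph: vertices are points of Sing (given by homogeneous coordinates,
   identified up to proportionality) and curves. *)
Inductive levi_vertex (k : nat) : Type :=
  | LPt of ('I_3 -> CC)
  | LCv of 'I_k.

Definition levi_vertex_ok (k : nat) (F : 'I_k -> {mpoly CC[3]}) (v : levi_vertex k) : Prop :=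
  match v with LPt x => in_sing F x | LCv _ => True end.

Definition levi_same (k : nat) (v w : levi_vertex k) : Prop :=
  match v, w with
  | LPt x, LPt y => proj_eq x y
  | LCv i, LCv j => i = j
  | _, _ => False
  end.

Definition levi_adj (k : nat) (F : 'I_k -> {mpoly CC[3]}) (v w : levi_vertex k) : Prop :=
  match v, w with
  | LPt x, LCv j => on_curve (F j) x
  | LCv j, LPt x => on_curve (F j) x
  | _, _ => False
  end.

Definition levi_induced_cycle (k : nat) (F : 'I_k -> {mpoly CC[3]}) (n : nat)
    (v : 'I_n -> levi_vertex k) : Prop :=
  [/\ forall i, levi_vertex_ok F (v i),
      forall i j, levi_same (v i) (v j) -> i = j
    & forall i j : 'I_n,
        levi_adj F (v i) (v j) <->
        ((j : nat) = (i.+1 %% n)%N \/ (i : nat) = (j.+1 %% n)%N)].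

(* Main.v *)
Require Import Defs.
From HB Require Import structures.
From mathcomp Require Import all_boot all_order all_algebra.
From mathcomp Require Import complex Rstruct mpoly.
From mathcomp Require Import zify.
Set Implicit Arguments. Unset Strict Implicit. Unset Printing Implicit Defensive.
Import GRing.Theory.
Local Open Scope ring_scope.
Notation T2 := {poly {poly CC}}.
Definition ev (a b : CC) : {rmorphism T2 -> CC} := (horner_eval b \o horner_eval a%:P)%FUN.
Definition pt (a b c : CC) : 'I_3 -> CC := fun i => nth 0 [:: a; b; c] i.
Definition hh : 'I_3 -> {poly T2} := fun i => nth 0 [:: ('X : T2)%:P; ((('X : {poly CC})%:P) : T2)%:P; 'X] i.
Definition Phi (F : {mpoly CC[3]}) : {poly T2} := mmap (fun c : CC => c%:P%:P%:P) hh F.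

Arguments ev a b : simpl never.
Lemma evE a b r : ev a b r = (r.[a%:P]).[b]. Proof. by []. Qed.
Lemma evX a b : ev a b 'X = a. Proof. by rewrite evE hornerX hornerC. Qed.
Lemma evY a b : ev a b ('X%:P) = b. Proof. by rewrite evE hornerC hornerX. Qed.
Lemma evC a b c : ev a b c%:P%:P = c. Proof. by rewrite evE !hornerC. Qed.

Lemma Phi_eval F a b c : (map_poly (ev a b) (Phi F)).[c] = F.@[pt a b c].
Proof.
rewrite /Phi /mmap mevalE rmorph_sum horner_sum; apply: eq_bigr => m _.
rewrite rmorphM hornerM /= map_polyC hornerC; congr (_ * _); first exact: evC.
rewrite /mmap1 rmorph_prod horner_prod; apply: eq_bigr => i _.
rewrite rmorphXn horner_exp; congr (_ ^+ _).
case: i => [[|[|[|//]]] ?]; rewrite /hh /pt /=.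
- by rewrite map_polyC hornerC; exact: evX.
- by rewrite map_polyC hornerC; exact: evY.
- by rewrite map_polyX hornerX.
Qed.

Definition i0 : 'I_3 := @Ordinal 3 0 isT.
Definition i1 : 'I_3 := @Ordinal 3 1 isT.
Definition i2 : 'I_3 := @Ordinal 3 2 isT.

Lemma prod3 (R : comNzRingType) (f : 'I_3 -> R) : \prod_(i < 3) f i = f i0 * f i1 * f i2.
Proof.
rewrite !big_ord_recl big_ord0 mulr1 mulrA.
by congr (f _ * f _ * f _); apply: val_inj.
Qed.

Lemma mdeg3 (m : 'X_{1..3}) : mdeg m = (m i0 + m i1 + m i2)%N.
Proof.
rewrite mdegE !big_ord_recl big_ord0 addn0 addnA.
by congr (m _ + m _ + m _)%N; apply: val_inj.
Qed.

Definition sm (m : 'X_{1..3}) : T2 := ('X : T2) ^+ m i0 * (('X : {poly CC})%:P) ^+ m i1.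

Lemma mmap1_hh m : mmap1 hh m = (sm m)%:P * 'X^(m i2).
Proof. by rewrite /mmap1 prod3 /hh /sm /= rmorphM /= !rmorphXn. Qed.

Lemma coef_Phi F j : (Phi F)`_j = \sum_(m <- msupp F) (F@_m)%:P%:P * sm m * (j == m i2)%:R.
Proof.
rewrite /Phi /mmap coef_sum; apply: eq_bigr => m _.
by rewrite mmap1_hh mulrA -rmorphM coefCM coefXn.
Qed.

Lemma eval_e2 F : F.@[pt 0 0 1] = \sum_(m <- msupp F) F@_m * ((m i0 == 0%N) && (m i1 == 0%N))%:R.
Proof.
rewrite mevalE; apply: eq_bigr => m _; rewrite prod3 /pt /= !expr0n expr1n mulr1.
by case: (m i0 == 0%N); case: (m i1 == 0%N); rewrite ?mulr1 ?mulr0.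
Qed.

Lemma eval_0 d F : (0 < d)%N -> F \is d.-homog -> F.@[pt 0 0 0] = 0.
Proof.
move=> d0 hF; rewrite mevalE big_seq big1 // => m Hm.
rewrite prod3 /pt /= !expr0n.
have Hd : (m i0 + m i1 + m i2 = d)%N by rewrite -mdeg3; exact: (dhomog_mf hF Hm).
case E0: (m i0 == 0%N); case E1: (m i1 == 0%N); case E2: (m i2 == 0%N);
  rewrite ?mulr1n ?mulr0n ?mulr0 ?mul0r //.
all: try by move: E0 E1 E2 => /eqP E0 /eqP E1 /eqP E2; lia.
all: exact: mulr0.


Qed.

Lemma size_Phi d F : F \is d.-homog -> (size (Phi F) <= d.+1)%N.
Proof.
move=> hF; apply/leq_sizeP => j hj; rewrite coef_Phi big_seq big1 // => m Hm.
have Hd : (m i0 + m i1 + m i2 = d)%N by rewrite -mdeg3; exact: (dhomog_mf hF Hm).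
rewrite (_ : (j == m i2) = false) ?mulr0 //; apply/eqP => E; lia.
Qed.

Lemma coefd_Phi d F : F \is d.-homog -> (Phi F)`_d = (F.@[pt 0 0 1])%:P%:P.
Proof.
move=> hF; rewrite coef_Phi eval_e2 !rmorph_sum; rewrite !big_seq; apply: eq_bigr => m Hm.
have Hd : (m i0 + m i1 + m i2 = d)%N by rewrite -mdeg3; exact: (dhomog_mf hF Hm).
rewrite !rmorphM /=.
case: (eqVneq (m i0) 0%N) => e0; case: (eqVneq (m i1) 0%N) => e1 /=.
- rewrite /sm e0 e1 !expr0 mulr1 (_ : m i2 = d); last by lia.
  by rewrite eqxx !polyC1 !mulr1.
- rewrite !polyC0 mulr0 (_ : (d == m i2) = false) ?mulr0 //; apply/eqP => E; lia.
- rewrite !polyC0 mulr0 (_ : (d == m i2) = false) ?mulr0 //; apply/eqP => E; lia.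
- rewrite !polyC0 mulr0 (_ : (d == m i2) = false) ?mulr0 //; apply/eqP => E; lia.
Qed.

Lemma size_gt (R : nzRingType) (p : {poly R}) i : p`_i != 0 -> (i < size p)%N.
Proof. by move=> H; rewrite ltnNge; apply: contra H => /leq_sizeP H; rewrite H. Qed.

Lemma lead_Phi d F : F \is d.-homog -> F.@[pt 0 0 1] != 0 ->
  lead_coef (Phi F) = (F.@[pt 0 0 1])%:P%:P.
Proof.
move=> hF nz; have cd := coefd_Phi hF.
have sz : size (Phi F) = d.+1.
  apply/eqP; rewrite eqn_leq size_Phi // size_gt // cd !polyC_eq0 //.
by rewrite lead_coefE sz.
Qed.

Lemma two_var (R : T2) : ev 0 0 R = 0 -> exists a b, ((a != 0) || (b != 0)) /\ ev a b R = 0.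
Proof.
move=> R0; case: (boolP [exists i : 'I_(size R), (0 < i)%N && (R`_i != 0)]).
  case/existsP => i /andP [i0 ri].
  have : R`_i * 'X != 0 by rewrite mulf_neq0 // polyX_eq0.
  case/closed_nonrootP => b; rewrite /root hornerMX mulf_eq0 negb_or => /andP [rb b0].
  pose S := map_poly (horner_eval b) R.
  have Si : S`_i != 0 by rewrite coef_map.
  have : size S != 1%N by have := size_gt Si; case: (size S) i0 => // [[|//]]; case: i {ri rb Si} => [[|]] //.
  case/closed_rootP => a; rewrite /root => /eqP Sa.
  exists a, b; split; first by rewrite b0 orbT.
  rewrite evE -Sa; transitivity ((map_poly (horner_eval b) R).[horner_eval b a%:P]).
    by rewrite horner_map.
  by rewrite /horner_eval hornerC.
move=> H.
have : (size R <= 1)%N.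
  apply/leq_sizeP => j hj; case: (ltnP j (size R)) => [jl|jg]; last exact: nth_default.
  apply/eqP; apply: contraNT H => Hj; apply/existsP; exists (Ordinal jl); rewrite /= Hj andbT.
  by [].
move/size1_polyC => ER; exists 1, 0; split; first by rewrite oner_eq0.
by move: R0; rewrite !evE ER !hornerC.
Qed.

Lemma bezout_core d F G : (0 < d)%N -> F \is d.-homog -> G \is d.-homog ->
  F.@[pt 0 0 1] != 0 -> G.@[pt 0 0 1] != 0 ->
  exists a b c, ((a != 0) || (b != 0)) /\ F.@[pt a b c] = 0 /\ G.@[pt a b c] = 0.
Proof.
move=> d0 hF hG nF nG.
have lF a b : ev a b (lead_coef (Phi F)) != 0 by rewrite (lead_Phi hF nF) evC.
have lG a b : ev a b (lead_coef (Phi G)) != 0 by rewrite (lead_Phi hG nG) evC.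
set R := resultant (Phi F) (Phi G).
have key a b : ev a b R = resultant (map_poly (ev a b) (Phi F)) (map_poly (ev a b) (Phi G)).
  exact: map_resultant.
have nz a b : map_poly (ev a b) (Phi F) != 0.
  rewrite -lead_coef_eq0 lead_coef_map_eq; [exact: lF | exact: lF].
have R0 : ev 0 0 R = 0.
  rewrite key; apply/eqP; rewrite resultant_eq0; apply: (@root_size_gt1 _ 0).
    by rewrite gcdp_eq0 negb_and nz.
  by rewrite root_gcd /root !Phi_eval (eval_0 d0 hF) (eval_0 d0 hG) eqxx.
have [a [b [ab Rab]]] := two_var R0.
move: Rab; rewrite key => /eqP; rewrite resultant_eq0 => sz.
have : size (gcdp (map_poly (ev a b) (Phi F)) (map_poly (ev a b) (Phi G))) != 1%N.
  by rewrite neq_ltn sz orbT.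
case/closed_rootP => c; rewrite root_gcd /root !Phi_eval => /andP [/eqP Fc /eqP Gc].
by exists a, b, c.
Qed.

Lemma bezout d F G : (0 < d)%N -> F \is d.-homog -> G \is d.-homog ->
  exists x, nonzero3 x /\ F.@[x] = 0 /\ G.@[x] = 0.
Proof.
move=> d0 hF hG.
have nzpt a b c : ((a != 0) || (b != 0)) -> nonzero3 (pt a b c).
  by case/orP => H; [exists i0 | exists i1].
have core F' G' : F' \is d.-homog -> G' \is d.-homog ->
    F'.@[pt 0 0 1] != 0 -> G'.@[pt 0 0 1] != 0 ->
    exists x, nonzero3 x /\ F'.@[x] = 0 /\ G'.@[x] = 0.
  move=> hF' hG' n1 n2; have [a [b [c [ab [e1 e2]]]]] := bezout_core d0 hF' hG' n1 n2.
  by exists (pt a b c); split => //; apply: nzpt.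
case: (boolP (F.@[pt 0 0 1] == 0)) => F0; case: (boolP (G.@[pt 0 0 1] == 0)) => G0.
- exists (pt 0 0 1); split; [exists i2; exact: oner_neq0 | split; apply/eqP; [exact: F0 | exact: G0]].
- have [x [nx [e1 e2]]] := core (F + G) G (dhomogD hF hG) hG (ltac:(by rewrite mevalD (eqP F0) add0r)) G0.
  by exists x; split => //; split => //; move: e1; rewrite mevalD e2 addr0.
- have [x [nx [e1 e2]]] := core F (G + F) hF (dhomogD hG hF) F0 (ltac:(by rewrite mevalD (eqP G0) add0r)).
  by exists x; split => //; split => //; move: e2; rewrite mevalD e1 addr0.
- exact: core.
Qed.

Lemma meval_scale d (G : {mpoly CC[3]}) (c : CC) (x y : 'I_3 -> CC) :
  G \is d.-homog -> (forall i, y i = c * x i) -> G.@[y] = c ^+ d * G.@[x].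
Proof.
move=> hG hy; rewrite !mevalE mulr_sumr !big_seq; apply: eq_bigr => m Hm.
rewrite mulrCA; congr (_ * _).
rewrite (eq_bigr (fun i => c ^+ m i * x i ^+ m i)); last by move=> i _; rewrite hy exprMn.
rewrite big_split /= prodrXr; congr (_ ^+ _ * _).
by rewrite -mdegE; exact: (dhomog_mf hG Hm).
Qed.

Lemma on_curve_proj d (G : {mpoly CC[3]}) x y : G \is d.-homog -> proj_eq x y ->
  on_curve G y = on_curve G x.
Proof.
move=> hG [c [c0 hy]]; rewrite /on_curve (meval_scale hG hy) mulf_eq0 expf_eq0.
by rewrite (negbTE c0) andbF.
Qed.

Lemma sing2 k (F : 'I_k -> {mpoly CC[3]}) i j x : i != j -> nonzero3 x ->
  on_curve (F i) x -> on_curve (F j) x -> in_sing F x.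
Proof.
move=> ij nx /eqP oi /eqP oj.
have E : \prod_(l < k) F l = F i * (F j * \prod_(l < k | (l != i) && (l != j)) F l).
  rewrite (bigD1 i) //=; congr (_ * _).
  by rewrite (bigD1 j) /=; [congr (_ * _); apply: eq_bigl => l; rewrite andbC | rewrite eq_sym].
split => //.
  by rewrite /on_curve E mevalM oi mul0r.
move=> l; rewrite /grad E !mderivM !mevalD !mevalM oi oj.
by rewrite !mul0r !mulr0 !addr0.
Qed.

Lemma succ_mod k i : (i < k)%N -> (i.+1 %% k = if i.+1 == k then 0 else i.+1)%N.
Proof.
move=> ik; case: eqP => [->|ne]; first by rewrite modnn.
by rewrite modn_small //; lia.
Qed.

Lemma hf_proof k (n : 'I_(2 * k)) : (n./2 < k)%N.
Proof. by rewrite ltn_half_double -mul2n. Qed.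
Definition hf k (n : 'I_(2 * k)) : 'I_k := Ordinal (hf_proof n).

Lemma arith k p q : (p < k)%N -> (q < k)%N ->
  (q = p \/ q = p.+1 %% k)%N <-> ((2 * q = (2 * p+1).+1 %% (2 * k)) \/ (2 * p+1 = (2 * q).+1 %% (2 * k)))%N.
Proof.
move=> pk qk; rewrite !succ_mod; try lia.
case: eqP => e1; case: eqP => e2; case: eqP => e3; lia.
Qed.

Lemma arith_par k a b : (a < 2 * k)%N -> (b < 2 * k)%N -> odd a = odd b ->
  ~ ((b = a.+1 %% (2 * k)) \/ (a = b.+1 %% (2 * k)))%N.
Proof.
move=> ak bk oab; rewrite !succ_mod //.
have ea := odd_double_half a; have eb := odd_double_half b.
rewrite -oab in eb.
case: (odd a) ea eb => /= ea eb; case: eqP => e1; case: eqP => e2; lia.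
Qed.

Local Close Scope ring_scope.
Theorem theorem5p3 (k d : nat) (F : 'I_k -> {mpoly CC[3]}) :
  4 <= k ->
  d_arrangement d F ->
  (* t_2 <> 0 *)
  (exists x, in_sing F x /\ mult F x = 2) ->
  (* t_r = 0 for all r > 2 *)
  (forall x, in_sing F x -> mult F x <= 2) ->
  exists v : 'I_(2 * k) -> levi_vertex k, levi_induced_cycle F v.
Proof.
move=> k4 [k3 d1 smooth _ _] _ mult2.
have hom j : F j \is d.-homog by case: (smooth j).
have kpos : (0 < k)%N by lia.
have only2 x i j l : in_sing F x -> i != j -> on_curve (F i) x -> on_curve (F j) x ->
    on_curve (F l) x -> l = i \/ l = j.
  move=> xs ij oi oj ol.
  case: (eqVneq l i) => [->|li]; first by left.
  case: (eqVneq l j) => [->|lj]; first by right.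
  exfalso; have := mult2 x xs; rewrite /mult.
  have sub : l |: [set i; j] \subset [set j0 | on_curve (F j0) x].
    by apply/subsetP => y; rewrite !inE => /or3P [] /eqP ->.
  have := subset_leq_card sub; rewrite cardsU1 cards2 ij !inE negb_or li lj /=.
  lia.
pose nxt (i : 'I_k) : 'I_k := Ordinal (ltn_pmod i.+1 kpos).
have nxt_neq (i : 'I_k) : i != nxt i.
  apply/eqP => /(congr1 val) /=; rewrite succ_mod //; case: eqP; lia.
have : forall i : 'I_k, exists x, in_sing F x /\ on_curve (F i) x /\ on_curve (F (nxt i)) x.
  move=> i; have [x [nx [e1 e2]]] := bezout d1 (hom i) (hom (nxt i)).
  exists x; have o1 : on_curve (F i) x by apply/eqP.
  have o2 : on_curve (F (nxt i)) x by apply/eqP.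
  by split => //; apply: (sing2 (nxt_neq i)).
case/fin_all_exists => P HP.
have onP (p q : 'I_k) : on_curve (F q) (P p) <-> (q = p \/ q = nxt p).
  have [s1 [o1 o2]] := HP p; split; first exact: only2.
  by case => ->.
pose v (n : 'I_(2 * k)) : levi_vertex k := if odd n then @LPt k (P (hf n)) else LCv (hf n).
exists v; split.
- by move=> n; rewrite /v; case: (odd n) => //=; case: (HP (hf n)).
- move=> a b; rewrite /v.
  have ea := odd_double_half a; have eb := odd_double_half b.
  have ha : (hf a : nat) = a./2 by [].
  have hb : (hf b : nat) = b./2 by [].
  case oa: (odd a); case ob: (odd b) => //= H; apply: val_inj => /=.
    suff E : hf a = hf b by rewrite -ea -eb oa ob -ha -hb E.
    have [s1 [o1 o2]] := HP (hf a).
    have [s2 [o3 o4]] := HP (hf b).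
    have o1' : on_curve (F (hf a)) (P (hf b)) by rewrite (on_curve_proj (hom _) H).
    have o2' : on_curve (F (nxt (hf a))) (P (hf b)) by rewrite (on_curve_proj (hom _) H).
    have la := ltn_ord (hf a); have lb := ltn_ord (hf b).
    case/onP: o1' => // e1; case/onP: o2' => e2.
      exfalso; move: e1 e2 => /(congr1 val) /= e1 /(congr1 val) /= e2.
      move: e1 e2; rewrite !succ_mod //.
      by case: eqP => ?; case: eqP => ?; lia.
    apply: val_inj; move: e2 => /(congr1 val) /=.
    rewrite !succ_mod //.
    by case: eqP => ?; case: eqP => ?; lia.
  by rewrite -ea -eb oa ob /= -ha -hb H.
- move=> a b; rewrite /v.
  have ea := odd_double_half a; have eb := odd_double_half b.
  have ha : (hf a : nat) = a./2 by [].
  have hb : (hf b : nat) = b./2 by [].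
  case oa: (odd a); case ob: (odd b) => /=.
  + split => // H; exfalso; apply: (@arith_par k a b (ltn_ord a) (ltn_ord b) _ H); by rewrite oa ob.
  + rewrite onP (_ : (hf b = hf a) <-> (hf b : nat) = hf a); last by split => [->|E]; [|apply: val_inj].
    rewrite (_ : (hf b = nxt (hf a)) <-> (hf b : nat) = ((hf a).+1 %% k)%N); last by split => [->|E]; [|apply: val_inj].
    rewrite arith ?ltn_ord // ha hb.
    rewrite oa ob /= in ea eb.
    have -> : (2 * b./2 = b)%N by rewrite -mul2n in eb; lia.
    have -> : (2 * a./2 + 1 = a)%N by rewrite -mul2n in ea; lia.
    by [].

  + rewrite onP (_ : (hf a = hf b) <-> (hf a : nat) = hf b); last by split => [->|E]; [|apply: val_inj].
    rewrite (_ : (hf a = nxt (hf b)) <-> (hf a : nat) = ((hf b).+1 %% k)%N); last by split => [->|E]; [|apply: val_inj].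
    rewrite arith ?ltn_ord // ha hb.
    rewrite oa ob /= in ea eb.
    have -> : (2 * a./2 = a)%N by rewrite -mul2n in ea; lia.
    have -> : (2 * b./2 + 1 = b)%N by rewrite -mul2n in eb; lia.
    tauto.
  + split => // H; exfalso; apply: (@arith_par k a b (ltn_ord a) (ltn_ord b) _ H); by rewrite oa ob.
Qed.
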